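(* Let $E$ be a metric space, $g\in\Sigma^E$, $t_0\in[0,\widehat T_g)$, and let $\tau$ be an $\mathcal F$-stopping time on $\Sigma^E$. Define $\tau_{g;t_0}$ on $\Sigma^E$ by $$\tau_{g;t_0}(f)=\begin{cases}(\tau(g\oplus_{t_0}f)-t_0)\vee 0,& \text{if } f(0)=g(t_0);\\ \widehat T_f,&\text{otherwise}.\end{cases}$$ Then $\tau_{g;t_0}$ is also an $\mathcal F$-stopping time.
   Context: $\Sigma^E$ is the set of continuous functions $f:[0,\widehat T_f)\to E$ with lifetime $\widehat T_f\in(0,\infty]$. For $t\ge0$ let $\Sigma^E_t=\{f:\widehat T_f>t\}$ and $\pi_t(f)=f(t)$ on $\Sigma^E_t$. Let $\mathcal F^*_t$ be the $\sigma$-algebra on $\Sigma^E$ generated by the sets $\Sigma^E_s$ and the maps $\pi_s$ (on $\Sigma^E_s$, with Borel sets of $E$) for $0\le s\le t$, and let $\mathcal F=(\mathcal F_t)_{t\ge0}$ be its right-continuation, $\mathcal F_t=\bigcap_{s>t}\mathcal F^*_s$. An $\mathcal F$-stopping time is a map $\tau:\Sigma^E\to[0,\infty]$ with $\{\tau\le t\}\in\mathcal F_t$ for all $t$. For $g\in\Sigma^E$, $t_0\in[0,\widehat T_g)$ and $f\in\Sigma^E$ with $f(0)=g(t_0)$, $g\oplus_{t_0}f$ is the function with lifetime $t_0+\widehat T_f$ equal to $g(t)$ for $0\le t<t_0$ and to $f(t-t_0)$ for $t_0\le t<t_0+\widehat T_f$. *)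

(* Defs.v *)
From HB Require Import structures.
From mathcomp Require Import all_boot all_order all_algebra.
From mathcomp Require Import all_classical all_reals all_analysis.
Set Implicit Arguments. Unset Strict Implicit. Unset Printing Implicit Defensive.
Import Order.TTheory GRing.Theory Num.Theory numFieldNormedType.Exports.
Local Open Scope classical_set_scope.
Local Open Scope ring_scope.

(* Raw paths: a lifetime in \bar R together with a function R -> E; only the
   values on [0, life) matter.  Sigma^E is the set of raw paths with
   positive lifetime that are continuous on [0, life). *)
Record rpath (R : realType) (E : Type) := Path { life : \bar R ; pathf : R -> E }.

Section Defs.
Context {R : realType} {E : pseudoMetricType R}.

Definition dom (p : rpath R E) : set R :=
  [set t | 0 <= t /\ (t%:E < life p)%E].

Definition Sigma : set (rpath R E) :=
  [set p | (0 < life p)%E /\ {within dom p, continuous (pathf p)}].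

Definition Sigma_t (t : R) : set (rpath R E) :=
  [set p | Sigma p /\ (t%:E < life p)%E].

Definition borelE : set (set E) := <<s open >>.

Definition gen_Fstar (t : R) : set (set (rpath R E)) :=
  [set A | exists s, 0 <= s /\ s <= t /\
     (A = Sigma_t s \/
      exists B, borelE B /\ A = Sigma_t s `&` [set p | B (pathf p s)])].

Definition Fstar (t : R) : set (set (rpath R E)) := <<s Sigma, gen_Fstar t >>.

Definition Fr (t : R) : set (set (rpath R E)) :=
  [set A | forall s, t < s -> Fstar s A].

Definition stopping_time (tau : rpath R E -> \bar R) : Prop :=
  (forall p, Sigma p -> (0 <= tau p)%E) /\
  (forall t, 0 <= t -> Fr t (Sigma `&` [set p | (tau p <= t%:E)%E])).

Definition concat (g : rpath R E) (t0 : R) (f : rpath R E) : rpath R E :=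
  Path (t0%:E + life f)%E
       (fun t => if t < t0 then pathf g t else pathf f (t - t0)).

Definition tau_shift (tau : rpath R E -> \bar R) (g : rpath R E) (t0 : R)
  (f : rpath R E) : \bar R :=
  if `[< pathf f 0 = pathf g t0 >] then maxe (tau (concat g t0 f) - t0%:E)%E 0%E
  else life f.

End Defs.

(* Main.v *)
Require Import Defs.
From HB Require Import structures.
From mathcomp Require Import all_boot all_order all_algebra.
From mathcomp Require Import all_classical all_reals all_analysis.
Import Order.TTheory GRing.Theory Num.Theory numFieldNormedType.Exports.
Local Open Scope classical_set_scope.
Local Open Scope ring_scope.

Section S.
Context {R : realType} {E : pseudoMetricType R}.

Lemma within_near {h : R -> E} {A : set R} {x W} :
  {within A, continuous h} -> A x -> nbhs (h x) W ->
  nbhs x [set y | A y -> W (h y)].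
Proof. by move=> /subspace_continuousP hc Ax HW; exact: (hc x Ax W HW). Qed.

Lemma nbhs_shift {x c : R} {P : set R} : nbhs (x - c) P -> nbhs x [set y | P (y - c)].
Proof.
move=> HP.
have hc : (fun y => y - c) @ x --> x - c.
  by apply: cvgB; [exact: cvg_id|exact: cvg_cst].
exact: hc HP.
Qed.

Lemma concat_Sigma (g f : rpath R E) t0 : Sigma g -> 0 <= t0 -> (t0%:E < life g)%E ->
  Sigma f -> pathf f 0 = pathf g t0 -> Sigma (concat g t0 f).
Proof.
move=> [g0 gc] t00 t0g [f0 fc] fg.
split.
  rewrite /=; apply: (lt_le_trans f0); exact: leeDr.
apply/subspace_continuousP => x Dx W /= HW.
set h := pathf (concat g t0 f) in HW *.
have key : nbhs x [set y | y < t0 -> dom g y -> W (pathf g y)] /\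
           nbhs x [set y | t0 <= y -> dom f (y - t0) -> W (pathf f (y - t0))].
  case: (ltgtP x t0) => xt.
  - have hx : h x = pathf g x by rewrite /h /= xt.
    split.
      have Dg : dom g x.
        split; first by case: Dx.
        by apply: lt_trans t0g; rewrite lte_fin.
      have HW' : nbhs (pathf g x) W by rewrite -hx.
      apply: filterS (within_near gc Dg HW').
      by move=> y /= H _; exact: H.
    apply: filterS (lt_nbhsl xt) => y /= yt ty; exfalso.
    by move: (lt_le_trans yt ty); rewrite ltxx.
  - have hx : h x = pathf f (x - t0) by rewrite /h /= ltNge (ltW xt).
    split; last first.
      have Df : dom f (x - t0).
        split; first by rewrite subr_ge0 ltW.
        case: Dx => _ /=; rewrite EFinB lteBlDl //.
      have HW' : nbhs (pathf f (x - t0)) W by rewrite -hx.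
      apply: filterS (nbhs_shift (within_near fc Df HW')).
      by move=> y /= H _; exact: H.
    apply: filterS (lt_nbhsr xt) => y /= yt ty; exfalso.
    by move: (lt_trans yt ty); rewrite ltxx.
  - subst x.
    have hx : h t0 = pathf f 0 by rewrite /h /= ltxx subrr.
    split.
      have HW' : nbhs (pathf g t0) W by rewrite -fg -hx.
      have Dg : dom g t0 by [].
      apply: filterS (within_near gc Dg HW').
      by move=> y /= H _; exact: H.
    have Df : dom f (t0 - t0) by rewrite subrr; split.
    have HW' : nbhs (pathf f (t0 - t0)) W by rewrite subrr -hx.
    apply: filterS (nbhs_shift (within_near fc Df HW')).
    by move=> y /= H _; exact: H.
case: key => k1 k2.
apply: filterS (filterI k1 k2) => y [H1 H2] [y0 yl].
rewrite /from_subspace /=; case: ifPn => yt.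
  apply: H1 => //; split => //.
  by apply: lt_trans t0g; rewrite lte_fin.
rewrite -leNgt in yt.
apply: H2 => //; split; first by rewrite subr_ge0.
by rewrite EFinB lteBlDl.
Qed.

End S.

Section Sig.
Context {T : Type} (D : set T) (G : set (set T)).

Lemma sU A B : <<s D, G >> A -> <<s D, G >> B -> <<s D, G >> (A `|` B).
Proof.
move=> hA hB; rewrite -bigcup2E; apply: sigma_algebra_bigcup => -[|[|n]] //=.
exact: sigma_algebra0.
Qed.

Lemma sDiff A B : A `<=` D -> <<s D, G >> A -> <<s D, G >> B ->
  <<s D, G >> (A `\` B).
Proof.
move=> AD hA hB.
have -> : A `\` B = D `\` ((D `\` A) `|` B).
  apply/seteqP; split => x /=.
    by move=> [Ax nB]; split; [exact: AD|move=> [[_ ?]|?]].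
  move=> [Dx H]; split; last by move=> ?; apply: H; right.
  by apply: contrapT => nA; apply: H; left.
by apply: sigma_algebraCD; apply: sU => //; exact: sigma_algebraCD.
Qed.

Lemma sI A B : A `<=` D -> <<s D, G >> A -> <<s D, G >> B ->
  <<s D, G >> (A `&` B).
Proof.
move=> AD hA hB.
have -> : A `&` B = A `\` (D `\` B).
  apply/seteqP; split => x /=.
    by move=> [Ax Bx]; split => // -[].
  move=> [Ax H]; split => //.
  by apply: contrapT => nB; apply: H; split => //; exact: AD.
by apply: sDiff => //; exact: sigma_algebraCD.
Qed.

End Sig.

Section Main.
Context {R : realType} {E : pseudoMetricType R}.

Lemma Fstar_mono (s u : R) (A : set (rpath R E)) : s <= u -> Fstar s A -> Fstar u A.
Proof.
move=> su; apply: sub_sigma_algebra2 => B [r [r0 [rs H]]].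
by exists r; split => //; split => //; exact: le_trans su.
Qed.

Lemma gen_Sigma_t (s r : R) : 0 <= r -> r <= s -> Fstar s (Sigma_t r : set (rpath R E)).
Proof. by move=> r0 rs; apply: sub_sigma_algebra; exists r; split => //; split => //; left. Qed.

Lemma gen_pi (s r : R) (B : set E) : 0 <= r -> r <= s -> borelE B ->
  Fstar s (Sigma_t r `&` [set p : rpath R E | B (pathf p r)]).
Proof.
move=> r0 rs hB; apply: sub_sigma_algebra; exists r; split => //; split => //.
by right; exists B.
Qed.

Lemma Sigma_t_sub (r : R) : Sigma_t r `<=` (Sigma : set (rpath R E)).
Proof. by move=> p []. Qed.

Lemma Sigma_Sigma_t0 (p : rpath R E) : Sigma p -> Sigma_t 0 p.
Proof. by move=> sp; split => //; case: sp. Qed.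

Variables (hE : hausdorff_space E) (g : rpath R E) (t0 : R)
  (hg : Sigma g) (ht0 : 0 <= t0) (ht0g : (t0%:E < life g)%E).

Definition D0 : set (rpath R E) := Sigma `&` [set p | pathf p 0 = pathf g t0].
Definition N0 : set (rpath R E) :=
  Sigma_t 0 `&` [set p | (~` [set pathf g t0]) (pathf p 0)].

Lemma N0_meas s : 0 <= s -> Fstar s N0.
Proof.
move=> s0; apply: gen_pi => //.
apply: sub_sigma_algebra; apply: closed_openC.
exact: (accessible_closed_set1 (hausdorff_accessible hE)).
Qed.

Lemma D0_sub : D0 `<=` Sigma.
Proof. by move=> p []. Qed.

Lemma N0_sub : N0 `<=` Sigma.
Proof. by move=> p [[]]. Qed.

Lemma D0_meas s : 0 <= s -> Fstar s D0.
Proof.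
move=> s0.
have -> : D0 = Sigma `\` N0.
  apply/seteqP; split => p /=.
    by move=> [sp e]; split => // -[_ /= ]; apply.
  move=> [sp H]; split => //.
  by apply: contrapT => ne; apply: H; split => //; exact: Sigma_Sigma_t0.
by apply: sigma_algebraCD; exact: N0_meas.
Qed.

Lemma D0_concat p : D0 p -> Sigma (concat g t0 p).
Proof. by move=> [sp e]; apply: concat_Sigma. Qed.

Lemma transfer (s : R) A : 0 <= s -> Fstar (s + t0) A ->
  Fstar s (D0 `&` concat g t0 @^-1` A).
Proof.
move=> s0 hA.
pose H := [set A : set (rpath R E) | Fstar s (D0 `&` concat g t0 @^-1` A)].
have hsig : sigma_algebra Sigma H.
  split.
  - by rewrite /H /= preimage_set0 setI0; exact: sigma_algebra0.
  - move=> B hB; rewrite /H /=.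
    have -> : D0 `&` concat g t0 @^-1` (Sigma `\` B) =
              D0 `\` (D0 `&` concat g t0 @^-1` B).
      apply/seteqP; split => p /=.
        by move=> [Dp [_ nB]]; split => // -[].
      move=> [Dp H1]; split => //; split; first exact: D0_concat.
      by move=> Bp; apply: H1.
    apply: sDiff => //; [exact: D0_sub|exact: D0_meas].
  - move=> F hF; rewrite /H /= preimage_bigcup setI_bigcupr.
    exact: sigma_algebra_bigcup.
have hgen : gen_Fstar (s + t0) `<=` H.
  move=> A' [r [r0 [rs HA]]].
  have [rt|tr] := ltP r t0.
  - case: HA => [->|[B [hB ->]]]; rewrite /H /=.
      have -> : D0 `&` concat g t0 @^-1` Sigma_t r = D0.
        apply/seteqP; split => p /=; first by case.
        move=> Dp; split => //; split; first exact: D0_concat.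
        rewrite /=; apply: (lt_le_trans (y := t0%:E)); first by rewrite lte_fin.
        by apply: leeDl; apply: ltW; case: Dp => -[].
      exact: D0_meas.
    have [Bg|nBg] := pselect (B (pathf g r)).
      have -> : D0 `&` concat g t0 @^-1` (Sigma_t r `&` [set p | B (pathf p r)]) = D0.
        apply/seteqP; split => p /=; first by case.
        move=> Dp; split => //; split; last by rewrite rt.
        split; first exact: D0_concat.
        rewrite /=; apply: (lt_le_trans (y := t0%:E)); first by rewrite lte_fin.
        by apply: leeDl; apply: ltW; case: Dp => -[].
      exact: D0_meas.
    have -> : D0 `&` concat g t0 @^-1` (Sigma_t r `&` [set p | B (pathf p r)]) = set0.
      apply/seteqP; split => p //= [_ [_]].
      by rewrite rt.
    exact: sigma_algebra0.
  - have r1 : 0 <= r - t0 by rewrite subr_ge0.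
    have r2 : r - t0 <= s by rewrite lerBlDr.
    case: HA => [->|[B [hB ->]]]; rewrite /H /=.
      have -> : D0 `&` concat g t0 @^-1` Sigma_t r = D0 `&` Sigma_t (r - t0).
        apply/seteqP; split => p /=.
          move=> [Dp [_ /= lt]]; split => //; split; first by case: Dp.
          by rewrite EFinB lteBlDl.
        move=> [Dp [_ lt]]; split => //; split; first exact: D0_concat.
        by move: lt; rewrite /= EFinB lteBlDl.
      apply: sI; [exact: D0_sub|exact: D0_meas|exact: gen_Sigma_t].
    have -> : D0 `&` concat g t0 @^-1` (Sigma_t r `&` [set p | B (pathf p r)]) =
              D0 `&` (Sigma_t (r - t0) `&` [set p | B (pathf p (r - t0))]).
      apply/seteqP; split => p /=.
        move=> [Dp [[_ /= lt] hB']]; split => //; split; last by move: hB'; rewrite ltNge tr.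
        split; first by case: Dp.
        by rewrite EFinB lteBlDl.
      move=> [Dp [[_ lt] hB']]; split => //; split; last by rewrite ltNge tr.
      split; first exact: D0_concat.
      by move: lt; rewrite /= EFinB lteBlDl.
    apply: sI; [exact: D0_sub|exact: D0_meas|exact: gen_pi].
exact: (smallest_sub hsig hgen hA).
Qed.

End Main.

Theorem lemma2p10 (R : realType) (E : pseudoMetricType R)
  (hE : hausdorff_space E)
  (g : rpath R E) (t0 : R) (hg : Sigma g) (ht0 : 0 <= t0) (ht0g : (t0%:E < life g)%E)
  (tau : rpath R E -> \bar R) (htau : stopping_time tau) :
  stopping_time (tau_shift tau g t0).
Proof.
split.
  move=> p sp; rewrite /tau_shift; case: asboolP => _.
    by rewrite le_max lexx orbT.
  by apply: ltW; case: sp.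
move=> t t_ge0 s ts.
have s0 : 0 <= s by apply: le_trans (ltW ts).
have tts : t + t0 < s + t0 by rewrite ltrD2r.
have h1 := htau.2 (t + t0) (addr_ge0 t_ge0 ht0) (s + t0) tts.
have h2 := @transfer R E hE g t0 hg ht0 ht0g s _ s0 h1.
have h3 : Fstar s (N0 g t0 `\` Sigma_t t).
  apply: sDiff; [exact: N0_sub|exact: (N0_meas hE g t0 s s0)|exact: gen_Sigma_t (ltW ts)].
have -> : Sigma `&` [set p | (tau_shift tau g t0 p <= t%:E)%E] =
  (D0 g t0 `&` concat g t0 @^-1` (Sigma `&` [set p | (tau p <= (t + t0)%:E)%E]))
  `|` (N0 g t0 `\` Sigma_t t).
  apply/seteqP; split => p /=.
    move=> [sp]; rewrite /tau_shift; case: asboolP => e hp.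
      left; split; first by split.
      split; first exact: concat_Sigma.
      move: hp; rewrite ge_max => /andP[hp _].
      by rewrite EFinD -leeBlDr.
    right; split.
      by split; [exact: Sigma_Sigma_t0|].
    move=> [_ lt]; move: (lt_le_trans lt hp); rewrite ltxx //.
  move=> [[[sp e] [_ htp]]|[[[sp _] ne] nt]].
    split => //; rewrite /tau_shift; case: asboolP => // _.
    by rewrite ge_max lee_fin t_ge0 andbT leeBlDr // -EFinD.
  split => //; rewrite /tau_shift; case: asboolP => // e.
  rewrite leNgt; apply/negP => lt; apply: nt; split => //.
by apply: sU.
Qed.
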